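(* Let $1\le p<2$, $f\in\mathcal H_0$, $u$ the solution of $\partial_tu+\partial J(u)\ni0$, $u(0)=f$, with extinction time $T_{\mathrm{ex}}$, and $w(t):=u(t)/a(t)$ with $a(t)=(1-t/T_{\mathrm{ex}})^{1/(2-p)}$. Assume $T_{\mathrm{ex}}=\frac{\|f\|^{2-p}}{(2-p)\lambda_1}$ and let $w_*$ be an asymptotic profile, i.e. $w_*\in\mathcal H$ with $w(t_k)\to w_*$ strongly for some $t_k\nearrow T_{\mathrm{ex}}$. Then $w_*$ is a ground state.
   Context: $\mathcal H$ is a real Hilbert space with inner product $\langle\cdot,\cdot\rangle$ and norm $\|\cdot\|$. $J:\mathcal H\to\mathbb R\cup\{\infty\}$ is convex, lower semicontinuous, proper, with dense effective domain, and absolutely $p$-homogeneous: $J(cu)=|c|^pJ(u)$ for $c\ne0$, $J(0)=0$. $\partial J(u)=\{\zeta: J(u)+\langle\zeta,v-u\rangle\le J(v)\ \forall v\}$; $\mathcal N(J)=\{u:J(u)=0\}$; $\mathcal H_0:=\mathcal N(J)^\perp\setminus\{0\}$. Rayleigh quotient $R(u):=pJ(u)/\|u\|^p$; standing coercivity assumption $\lambda_1:=\inf_{u\in\mathcal H_0}R(u)>0$; a ground state is a minimizer of $R$ over $\mathcal H_0$. The gradient flow solution (Brezis) is the unique continuous $u:[0,\infty)\to\mathcal H$, Lipschitz on $[\delta,\infty)$ for all $\delta>0$, right-differentiable on $(0,\infty)$ with $u(0)=f$ and $\partial_t^+u(t)=-\zeta(t)$, $\zeta(t)$ the minimal-norm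 element of $\partial J(u(t))$. $T_{\mathrm{ex}}:=\inf\{T>0:u(t)=0\ \forall t\ge T\}$. *)

(* Defs.v *)
From HB Require Import structures.
From mathcomp Require Import all_boot all_order all_algebra.
From mathcomp Require Import all_classical all_reals all_analysis.
Set Implicit Arguments. Unset Strict Implicit. Unset Printing Implicit Defensive.
Import Order.TTheory GRing.Theory Num.Theory.
Import numFieldNormedType.Exports.
Local Open Scope classical_set_scope.
Local Open Scope ring_scope.

Section Defs.
Variables (R : realType) (V : normedModType R).

(* [inner] is an inner product inducing the norm of V; together with
   completeness of V this makes V a real Hilbert space. *)
Definition is_inner_product (inner : V -> V -> R) : Prop :=
  [/\ (forall x y, inner x y = inner y x),
      (forall (a : R) x y z, inner (a *: x + y) z = a * inner x z + inner y z)
    & (forall x, `|x| ^+ 2 = inner x x)].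

Definition convex_functional (J : V -> \bar R) : Prop :=
  forall (t : R) (x y : V), 0 <= t <= 1 ->
    (J (t *: x + (1 - t) *: y)%R <= t%:E * J x + (1 - t)%:E * J y)%E.

Definition proper_functional (J : V -> \bar R) : Prop :=
  (forall x, J x != -oo%E) /\ (exists x, (J x < +oo)%E).

Definition effective_domain (J : V -> \bar R) : set V :=
  [set x | (J x < +oo)%E].

Definition dense_set (A : set V) : Prop := closure A = setT.

Definition abs_homogeneous (p : R) (J : V -> \bar R) : Prop :=
  (forall (c : R) (x : V), c != 0 -> J (c *: x) = ((`|c| `^ p)%:E * J x)%E)
  /\ J (0 : V) = 0%E.

Definition subdiff (inner : V -> V -> R) (J : V -> \bar R) (x : V) : set V :=
  [set z | forall v, (J x + (inner z (v - x)%R)%:E <= J v)%E].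

Definition min_norm_subgrad (inner : V -> V -> R) (J : V -> \bar R)
    (x z : V) : Prop :=
  subdiff inner J x z /\ forall y, subdiff inner J x y -> `|z| <= `|y|.

Definition nullJ (J : V -> \bar R) : set V := [set x | J x = 0%E].

Definition H0 (inner : V -> V -> R) (J : V -> \bar R) : set V :=
  [set x | x != 0 /\ forall n, nullJ J n -> inner x n = 0].

Definition rayleigh (p : R) (J : V -> \bar R) (x : V) : \bar R :=
  ((p / (`|x| `^ p))%:E * J x)%E.

Definition lambda1 (p : R) (inner : V -> V -> R) (J : V -> \bar R) : \bar R :=
  ereal_inf [set rayleigh p J x | x in H0 inner J].

Definition ground_state (p : R) (inner : V -> V -> R) (J : V -> \bar R)
    (w : V) : Prop :=
  H0 inner J w /\ forall v, H0 inner J v -> (rayleigh p J w <= rayleigh p J v)%E.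

(* Brezis gradient flow solution of du/dt + dJ(u) \ni 0, u(0) = f
   (u is only relevant on [0, +oo)). *)
Definition gradient_flow_solution (inner : V -> V -> R) (J : V -> \bar R)
    (f : V) (u : R -> V) : Prop :=
  [/\ {within [set t : R | 0 <= t], continuous u},
      (forall delta : R, 0 < delta -> exists L : R, forall s t,
          delta <= s -> delta <= t -> `|u s - u t| <= L * `|s - t|),
      u 0 = f
    & forall t : R, 0 < t -> exists zeta : V,
        min_norm_subgrad inner J (u t) zeta /\
        (h^-1 *: (u (t + h) - u t) @[h --> (0 : R)^'+] --> - zeta)].

(* extinction time T_ex = inf {T > 0 | u(t) = 0 for all t >= T}
   (as an extended real: +oo if the set is empty) *)
Definition extinction_time (u : R -> V) : \bar R :=
  ereal_inf [set T%:E | T in [set T : R | 0 < T /\ forall t, T <= t -> u t = 0]].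

End Defs.

(* Main.v *)
Require Import Defs.
From HB Require Import structures.
From mathcomp Require Import all_boot all_order all_algebra.
From mathcomp Require Import all_classical all_reals all_analysis.
Import Order.TTheory GRing.Theory Num.Theory.
Import numFieldNormedType.Exports.
From mathcomp Require Import ring lra.
Local Open Scope classical_set_scope.
Local Open Scope ring_scope.

Section Dini.
Variable R : realType.

Lemma within_ed (phi : R -> R) (A : set R) t :
  phi @ within A (nbhs t) --> phi t ->
  forall e, 0 < e -> exists2 d, 0 < d &
    forall s, A s -> `|s - t| < d -> `|phi s - phi t| < e.
Proof.
move=> H e e0.
have := (cvgrPdist_lt _ _).1 H e e0.
move=> /(_ (within_filter _ _)).
rewrite near_withinE => /nbhs_ballP [d d0 Hd].
exists d => // s As st.
have := Hd s; rewrite /ball /= distrC => /(_ st As).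
by rewrite distrC.
Qed.

Lemma rder_ed (phi : R -> R) t D :
  (fun h => h^-1 * (phi (t + h) - phi t)) @ 0^'+ --> D ->
  forall e, 0 < e -> exists2 d, 0 < d &
    forall h, 0 < h < d -> phi (t + h) - phi t <= (D + e) * h.
Proof.
move=> H e e0.
have := (cvgrPdist_lt _ _).1 H e e0.
move=> /(_ (within_filter _ _)).
rewrite near_withinE => /nbhs_ballP [d d0 Hd].
exists d => // h /andP[h0 hd].
have := Hd h; rewrite /ball /= sub0r normrN gtr0_norm // => /(_ hd h0).
set Q := h^-1 * _ => H1.
have -> : phi (t + h) - phi t = (h^-1 * (phi (t + h) - phi t)) * h.
  by rewrite mulrAC mulVf ?mul1r // gt_eqF.
rewrite ler_pM2r // -/Q; apply: ltW; move: H1; rewrite ltr_norml => /andP[H2 H3]; lra.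
Qed.

Lemma dini (phi : R -> R) (A : set R) a b :
  a <= b -> (forall s, a <= s <= b -> A s) ->
  (forall t, a <= t <= b -> phi @ within A (nbhs t) --> phi t) ->
  (forall t, a < t < b -> forall e, 0 < e -> exists2 d, 0 < d &
      forall h, 0 < h < d -> phi (t + h) - phi t <= e * h) ->
  phi b <= phi a.
Proof.
move=> ab HA Hc Hd.
apply/ler_addgt0Pr => eps eps0.
pose ep := eps / (b - a + 1).
have ep0 : 0 < ep by apply: divr_gt0 => //; lra.
have epE : ep * (b - a) + ep = eps.
  have hb : b - a + 1 != 0 by apply: lt0r_neq0; lra.
  by rewrite /ep; field.
pose S := [set t | a <= t <= b /\ phi t <= phi a + ep * (t - a) + ep].
have Sa : S a by split; [apply/andP; lra | rewrite subrr mulr0 addr0; lra].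
have Sub : ubound S b by move=> t [/andP[_ ?] _].
have hS : has_sup S by split; [exists a | exists b].
pose s := sup S.
have as_ : a <= s by apply: sup_upper_bound.
have sb : s <= b by apply: ge_sup => //; exists a.
have asb : a <= s <= b by rewrite as_ sb.
have Ss : S s.
  split; first by apply/andP.
  rewrite leNgt; apply/negP => Hlt.
  pose eta := phi s - (phi a + ep * (s - a) + ep).
  have eta0 : 0 < eta by rewrite /eta subr_gt0.
  have e2 : 0 < eta / 2 by lra.
  have [d d0 Hd'] := @within_ed phi A s (Hc s asb) (eta / 2) e2.
  have [r Sr rs] := sup_adherent d0 hS.
  have rle : r <= s := sup_upper_bound hS Sr.
  move: rs; rewrite -/s => rs.
  case: Sr => /andP[ar rb] Hr.
  have arb : a <= r <= b by rewrite ar rb.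
  have rsd : `|r - s| < d by rewrite ler0_norm ?subr_le0 //; lra.
  have := Hd' r (HA r arb) rsd.
  rewrite ltr_norml => /andP[H1 H2].
  have Hm : ep * (r - a) <= ep * (s - a) by rewrite ler_pM2l //; lra.
  rewrite /eta in H1 H2 e2 eta0; lra.
have sEb : s = b.
  apply/eqP; rewrite eq_le sb /= leNgt; apply/negP => sltb.
  case: Ss => _ Hs.
  move: as_; rewrite le_eqVlt => /orP[/eqP aEs | alts].
  - have aab : a <= a <= b by rewrite lexx ab.
    have [d d0 Hd'] := @within_ed phi A a (Hc a aab) ep ep0.
    pose m := Num.min d (b - a).
    have m0 : 0 < m by rewrite /m lt_min d0 /=; lra.
    have md : m <= d by rewrite /m ge_min lexx.
    have mb : m <= b - a by rewrite /m ge_min lexx orbT.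
    have arb : a <= a + m / 2 <= b by apply/andP; split; lra.
    have : S (a + m / 2).
      split => //.
      have := Hd' (a + m / 2) (HA _ arb).
      have -> : a + m / 2 - a = m / 2 by ring.
      rewrite gtr0_norm; last by lra.
      move=> /(_ ltac:(lra)); rewrite ltr_norml => /andP[H1 H2].
      have : 0 <= ep * (m / 2) by apply: mulr_ge0; lra.
      lra.
    move/(sup_upper_bound hS); rewrite -/s -aEs; lra.
  - have ast : a < s < b by rewrite alts sltb.
    have [d d0 Hd'] := Hd s ast ep ep0.
    pose m := Num.min d (b - s).
    have m0 : 0 < m by rewrite /m lt_min d0 /=; lra.
    have md : m <= d by rewrite /m ge_min lexx.
    have mb : m <= b - s by rewrite /m ge_min lexx orbT.
    have := Hd' (m / 2) ltac:(apply/andP; split; lra).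
    move=> H1.
    have : S (s + m / 2).
      split; first by apply/andP; split; lra.
      have -> : ep * (s + m / 2 - a) = ep * (s - a) + ep * (m / 2) by ring.
      lra.
    move/(sup_upper_bound hS); rewrite -/s; lra.
case: Ss; rewrite sEb => _; lra.
Qed.
End Dini.

Section Lim.
Variable R : realType.
Lemma left_lim_le (f : R -> R) l K :
  f @ 0^'- --> l -> (forall h, -1 < h < 0 -> f h <= K) -> l <= K.
Proof.
move=> H HK; apply/ler_addgt0Pr => e e0.
have := (cvgrPdist_lt _ _).1 H e e0.
move=> /(_ (within_filter _ _)).
rewrite near_withinE => /nbhs_ballP [d d0 Hd].
pose m := Num.min d 1.
have m0 : 0 < m by rewrite /m lt_min d0 /=.
have md : m <= d by rewrite /m ge_min lexx.
have m1 : m <= 1 by rewrite /m ge_min lexx orbT.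
have := Hd (- (m / 2)); rewrite /ball /= sub0r opprK gtr0_norm; last by lra.
move=> /(_ ltac:(lra) ltac:(lra)).
rewrite ltr_norml => /andP[H1 H2].
have := HK (- (m / 2)) ltac:(apply/andP; split; lra).
lra.
Qed.

Lemma punct_left (f : R -> R) (l : R) : f @ (0:R)^' --> l -> f @ (0:R)^'- --> l.
Proof.
move=> cvfx A /cvfx /nbhs_ballP [_ /posnumP[e] xe_A].
by exists e%:num => //= y xe_y /lt_eqF/negbT/xe_A; exact.
Qed.

Lemma punct_right (f : R -> R) (l : R) : f @ (0:R)^' --> l -> f @ (0:R)^'+ --> l.
Proof.
move=> cvfx A /cvfx /nbhs_ballP [_ /posnumP[e] xe_A].
by exists e%:num => //= y xe_y /gt_eqF/negbT/xe_A; exact.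
Qed.

Lemma deriv_powR1 (p : R) :
  (fun h => h^-1 * ((1 + h) `^ p - 1)) @ 0^' --> p.
Proof.
have D := is_derive1_powR p (@ltr01 R).
have H1 := @ex_derive _ _ _ _ _ _ _ D.
have H2 := @derive_val _ _ _ _ _ _ _ D.
Show.
rewrite powR1 /= mulr1 in H2.
move: H1 => /cvg_ex [l Hl].
have lE : l = p.
  rewrite -H2 /derive; apply/esym; exact: (cvg_lim (@norm_hausdorff _ _) Hl).
move: Hl; rewrite lE; apply: cvg_trans; apply: near_eq_cvg.
near=> h; rewrite /= powR1 /=.
by rewrite -[h%:A]/(h * 1) mulr1 (addrC h 1).
Unshelve. all: by end_near.
Qed.

Lemma is_derive_slope (phi : R -> R) (x0 d : R) : is_derive x0 1 phi d ->
  (fun k => k^-1 * (phi (x0 + k) - phi x0)) @ (0:R)^' --> d.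
Proof.
move=> D.
have H1 := @ex_derive _ _ _ _ _ _ _ D.
have H2 := @derive_val _ _ _ _ _ _ _ D.
move: H1 => /cvg_ex [l Hl].
have lE : l = d.
  rewrite -H2 /derive; apply/esym; exact: (cvg_lim (@norm_hausdorff _ _) Hl).
move: Hl; rewrite lE; apply: cvg_trans; apply: near_eq_cvg.
near=> h; rewrite /=.
by rewrite -[h%:A]/(h * 1) mulr1 (addrC h x0).
Unshelve. all: by end_near.
Qed.

Lemma chain_right (phi E : R -> R) (t x0 d de : R) :
  is_derive x0 1 phi d -> E t = x0 ->
  (fun h => h^-1 * (E (t + h) - E t)) @ (0:R)^'+ --> de ->
  (fun h => h^-1 * (phi (E (t + h)) - phi (E t))) @ (0:R)^'+ --> d * de.
Proof.
move=> D Et HE.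
have Hs := is_derive_slope _ _ _ D.
pose rho k := if k == 0 then d else k^-1 * (phi (x0 + k) - phi x0).
have rc : {for 0, continuous rho}.
  apply/continuous_withinNx; rewrite /rho eqxx.
  move: Hs; apply: cvg_trans; apply: near_eq_cvg.
  near=> k; have k0 : k != 0 by near: k; exact: nbhs_dnbhs_neq.
  by rewrite /= (negbTE k0).
have HE0 : (fun h => E (t + h) - x0) @ (0:R)^'+ --> 0.
  have : (fun h => h * (h^-1 * (E (t + h) - E t))) @ (0:R)^'+ --> 0 * de.
    apply: cvgM => //; apply: cvg_at_right_filter; exact: cvg_id.
  rewrite mul0r; apply: cvg_trans; apply: near_eq_cvg.
  near=> h; have h0 : 0 < h by near: h; exact: nbhs_right_gt.
  by rewrite /= mulrA mulfV ?mul1r ?Et // gt_eqF.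
have Hr := continuous_cvg _ rc HE0.
have rho0 : rho 0 = d by rewrite /rho eqxx.
rewrite rho0 in Hr.
have : (fun h => rho (E (t + h) - x0) * (h^-1 * (E (t + h) - E t))) @ (0:R)^'+ --> d * de.
  by apply: cvgM => //; apply: Hr.
apply: cvg_trans; apply: near_eq_cvg; near=> h.
rewrite /rho; case: eqP => [E0|/eqP E0].
  have -> : E (t + h) = x0 by apply/eqP; rewrite -subr_eq0 E0.
  by rewrite Et !subrr !mulr0.
have gen : forall (a b c : R), a != 0 -> a^-1 * b * (c * a) = c * b by move=> a b c a0; field.
by rewrite Et /= (addrC x0) subrK gen.
Unshelve. all: by end_near.
Qed.

Lemma dini_lim (phi : R -> R) (A : set R) a b :
  a <= b -> (forall s, a <= s <= b -> A s) ->
  (forall t, a <= t <= b -> phi @ within A (nbhs t) --> phi t) ->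
  (forall t, a < t < b -> exists2 D : R, D <= 0 &
      (fun h => h^-1 * (phi (t + h) - phi t)) @ (0:R)^'+ --> D) ->
  phi b <= phi a.
Proof.
move=> ab HA Hc Hd; apply: (@dini R phi A a b ab HA Hc) => t abt e e0.
have [D D0 HD] := Hd t abt.
have [d d0 Hd'] := @rder_ed R phi t D HD e e0.
exists d => // h hd; apply: le_trans (Hd' h hd) _.
case/andP: hd => h0 _; rewrite ler_pM2r //; lra.
Qed.

Lemma slope_const (phi : R -> R) (t d D : R) :
  0 < d -> (forall h, 0 < h < d -> phi (t + h) = phi t) ->
  (fun h => h^-1 * (phi (t + h) - phi t)) @ (0:R)^'+ --> D -> D = 0.
Proof.
move=> d0 Hc HD.
have Hz0 : (fun h => h^-1 * (phi (t + h) - phi t)) @ (0:R)^'+ --> (0:R).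
  apply: cvg_near_cst.
  near=> h; have h0 : 0 < h by near: h; exact: nbhs_right_gt.
  have hd : h < d by near: h; exact: nbhs_right_lt.
  by rewrite Hc ?subrr ?mulr0 // h0 hd.
exact: (cvg_unique (@norm_hausdorff _ _) HD Hz0).
Unshelve. all: by end_near.
Qed.

End Lim.
Section Main.
Variables (R : realType) (V : normedModType R) (inner : V -> V -> R)
  (J : V -> \bar R) (p : R).
Hypothesis Hi : is_inner_product inner.
Hypotheses (Hc : convex_functional J) (Hp : proper_functional J)
  (Hh : abs_homogeneous p J).

Lemma inner_sym x y : inner x y = inner y x.
Proof. by case: Hi. Qed.

Lemma inner_norm x : `|x| ^+ 2 = inner x x.
Proof. by case: Hi. Qed.

Lemma inner0l z : inner 0 z = 0.
Proof.
case: Hi => _ L _; have := L 1 0 0 z.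
rewrite scaler0 addr0 mul1r => H.
lra.
Qed.

Lemma innerDl x y z : inner (x + y) z = inner x z + inner y z.
Proof. by case: Hi => _ L _; rewrite -[x]scale1r L mul1r scale1r. Qed.

Lemma innerZl a x z : inner (a *: x) z = a * inner x z.
Proof. by case: Hi => _ L _; rewrite -[a *: x]addr0 L inner0l addr0. Qed.

Lemma innerNl x z : inner (- x) z = - inner x z.
Proof. by rewrite -scaleN1r innerZl mulN1r. Qed.

Lemma innerBl x y z : inner (x - y) z = inner x z - inner y z.
Proof. by rewrite innerDl innerNl. Qed.

Lemma innerDr x y z : inner z (x + y) = inner z x + inner z y.
Proof. by rewrite inner_sym innerDl !(inner_sym z). Qed.

Lemma innerZr a x z : inner z (a *: x) = a * inner z x.
Proof. by rewrite inner_sym innerZl inner_sym. Qed.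

Lemma innerNr x z : inner z (- x) = - inner z x.
Proof. by rewrite inner_sym innerNl inner_sym. Qed.

Lemma innerBr x y z : inner z (x - y) = inner z x - inner z y.
Proof. by rewrite innerDr innerNr. Qed.

Lemma inner0r z : inner z 0 = 0.
Proof. by rewrite inner_sym inner0l. Qed.

Lemma polar x y : inner x y = (`|x + y| ^+ 2 - `|x - y| ^+ 2) / 4.
Proof.
rewrite !inner_norm !innerDl !innerDr !innerNl !innerNr (inner_sym y x).
by field.
Qed.

Lemma cvg_inner {T : Type} (F : set_system T) (FF : Filter F)
   (a b : T -> V) (la lb : V) :
  a @ F --> la -> b @ F --> lb ->
  (fun h => inner (a h) (b h)) @ F --> inner la lb.
Proof.
move=> Ha Hb.
have -> : (fun h => inner (a h) (b h)) =
   (fun h => (`|a h + b h| * `|a h + b h| - `|a h - b h| * `|a h - b h|) / 4).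
  by apply/funext => h; rewrite polar !expr2.
rewrite polar !expr2.
apply: cvgMr_tmp.
have HD : (fun h => a h + b h) @ F --> la + lb by apply: cvgD.
have HB : (fun h => a h - b h) @ F --> la - lb by apply: cvgB.
have ND := cvg_norm HD; have NB := cvg_norm HB.
apply: cvgB; [by apply: cvgM; apply: ND | by apply: cvgM; apply: NB].
Qed.


Lemma J0 : J 0 = 0%E. Proof. by case: Hh. Qed.
Lemma JZ c x : c != 0 -> J (c *: x) = ((`|c| `^ p)%:E * J x)%E.
Proof. by case: Hh => H _; apply: H. Qed.

Lemma Jcases x : J x = +oo%E \/ exists r, J x = r%:E.
Proof.
case: Hp => H _; case E: (J x) => [r| |].
- by right; exists r.
- by left.
- by move: (H x); rewrite E.
Qed.

Lemma JN x : J (- x) = J x.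
Proof.
rewrite -scaleN1r JZ ?oppr_eq0 ?oner_neq0 // normrN normr1 powR1 /=.
by rewrite mul1e.
Qed.

Lemma Jge0 x : (0 <= J x)%E.
Proof.
have h : 0 <= (2^-1 : R) <= 1 by apply/andP; split; lra.
have := Hc (2^-1) x (- x) h.
have -> : (1 - 2^-1 : R) = 2^-1 by field.
rewrite scalerN subrr J0 JN.
case: (Jcases x) => [->|[r ->]]; first by rewrite leey.
by rewrite -EFinM -EFinD !lee_fin => H; lra.
Qed.

Lemma Jsub_fin {x z} : subdiff inner J x z -> exists j, J x = j%:E.
Proof.
move=> Hz; case: (Jcases x) => // Ex; exfalso.
case: Hp => _ [v Hv]; have := Hz v; rewrite Ex /= => H.
by move: (le_lt_trans H Hv); rewrite ltxx.
Qed.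

Lemma sub_le {x z v j y} : subdiff inner J x z -> J x = j%:E ->
  (J v <= y%:E)%E -> j + inner z (v - x) <= y.
Proof.
move=> Hz Ex Hv; have := le_trans (Hz v) Hv.
by rewrite Ex -EFinD lee_fin.
Qed.

Lemma Jfin_ge0 {x j} : J x = j%:E -> 0 <= j.
Proof. by move=> Ex; have := Jge0 x; rewrite Ex lee_fin. Qed.

Lemma sub_null x z n : subdiff inner J x z -> nullJ J n -> inner z n = 0.
Proof.
move=> Hz Hn.
have [j Ex] := Jsub_fin Hz.
pose K := 2^-1 * (2 `^ p * j).
have HK : forall c, j + c * inner z n <= K.
  move=> c.
  have h : 0 <= (2^-1 : R) <= 1 by apply/andP; split; lra.
  have := @Hc (2^-1) (2 *: x) ((2 * c) *: n) h.
  have -> : 2^-1 *: (2 *: x) + (1 - 2^-1) *: ((2 * c) *: n) = x + c *: n.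
    rewrite !scalerA.
    have -> : 2^-1 * 2 = 1 :> R by field.
    have -> : (1 - 2^-1) * (2 * c) = c :> R by field.
    by rewrite scale1r.
  have -> : (1 - 2^-1 : R) = 2^-1 by field.
  rewrite (JZ 2 x) ?pnatr_eq0 //.
  have -> : J ((2 * c) *: n) = 0%E.
    have [->|c0] := eqVneq c 0; first by rewrite mulr0 scale0r J0.
    rewrite JZ ?mulf_neq0 ?pnatr_eq0 //.
    by rewrite Hn mule0.
  rewrite mule0 adde0 Ex -!EFinM => H.
  have := sub_le Hz Ex H.
  by rewrite (addrC x) addrK innerZr // ger0_norm // /K.
apply/eqP; apply/negP => iz0.
pose c := (`|K - j| + 1) / inner z n.
have := HK c; rewrite /c mulfVK //.
have := ler_norm (K - j); lra.
by apply/negP.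
Qed.

Lemma sub_euler x z j : 1 <= p -> subdiff inner J x z -> J x = j%:E ->
  p * j <= inner z x.
Proof.
move=> p1 Hz Ex.
have j0 := Jfin_ge0 Ex.
have key : forall h, -1 < h < 0 -> h * inner z x <= ((1 + h) `^ p - 1) * j.
  move=> h /andP[h1 h0].
  have c0 : 0 < 1 + h by clear Ex; lra.
  have := sub_le (v := (1 + h) *: x) Hz Ex (y := (1 + h) `^ p * j).
  rewrite JZ ?lt0r_neq0 // Ex -EFinM gtr0_norm //.
  move=> /(_ (lexx _)).
  rewrite -{2}(scale1r x) -scalerBl innerZr => H.
  clear Ex.
  have E : (1 + h - 1) * inner z x = h * inner z x by ring.
  lra.
clear Ex.
rewrite mulrC.
apply: (@left_lim_le R (fun h => j * (h^-1 * ((1 + h) `^ p - 1))) (j * p) (inner z x)).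
  apply: cvgMl_tmp; apply: punct_left; exact: deriv_powR1.
move=> h /andP[h1 h0].
move: (key h ltac:(apply/andP; split => //)) => Hk.
rewrite -(ler_nM2l h0).
have -> : h * (j * (h^-1 * ((1 + h) `^ p - 1))) = ((1 + h) `^ p - 1) * j.
  by field; exact: ltr0_neq0.
lra.
Qed.

Lemma u_rcont (u : R -> V) t zeta :
  h^-1 *: (u (t + h) - u t) @[h --> (0 : R)^'+] --> - zeta ->
  u (t + h) @[h --> (0 : R)^'+] --> u t.
Proof.
move=> HD.
have : (fun h => u t + h *: (h^-1 *: (u (t + h) - u t))) @ (0:R)^'+ --> u t + 0 *: - zeta.
  apply: cvgD; first exact: cvg_cst.
  apply: cvgZ => //; apply: cvg_at_right_filter; exact: cvg_id.
rewrite scale0r addr0; apply: cvg_trans; apply: near_eq_cvg.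
near=> h; have h0 : 0 < h by near: h; exact: nbhs_right_gt.
by rewrite scalerA mulfV ?gt_eqF // scale1r addrC subrK.
Unshelve. all: by end_near.
Qed.

Lemma rder_inner (u : R -> V) t zeta n :
  h^-1 *: (u (t + h) - u t) @[h --> (0 : R)^'+] --> - zeta ->
  h^-1 * (inner (u (t + h)) n - inner (u t) n) @[h --> (0 : R)^'+] --> - inner zeta n.
Proof.
move=> HD.
have -> : (fun h => h^-1 * (inner (u (t + h)) n - inner (u t) n)) =
    (fun h => inner (h^-1 *: (u (t + h) - u t)) n).
  by apply/funext => h; rewrite innerZl innerBl.
rewrite -innerNl; apply: cvg_inner => //; exact: cvg_cst.
Qed.

Lemma rder_sq (u : R -> V) t zeta :
  h^-1 *: (u (t + h) - u t) @[h --> (0 : R)^'+] --> - zeta ->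
  h^-1 * (`|u (t + h)| ^+ 2 - `|u t| ^+ 2) @[h --> (0 : R)^'+] --> - (2 * inner zeta (u t)).
Proof.
move=> HD.
have -> : (fun h => h^-1 * (`|u (t + h)| ^+ 2 - `|u t| ^+ 2)) =
    (fun h => inner (h^-1 *: (u (t + h) - u t)) (u (t + h) + u t)).
  apply/funext => h; rewrite innerZl !inner_norm; congr (_ * _).
  rewrite innerBl !innerDr (inner_sym (u t) (u (t + h))); ring.
have -> : - (2 * inner zeta (u t)) = inner (- zeta) (u t + u t).
  by rewrite innerNl innerDr; ring.
apply: cvg_inner => //; apply: cvgD; [exact: (u_rcont _ _ _ HD) | exact: cvg_cst].
Qed.

Lemma main_gs (lam1 : R) (f : V) (u : R -> V) (Tex : R) (wstar : V) (tk : nat -> R) :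
  lower_semicontinuous J ->
  lambda1 p inner J = lam1%:E -> 0 < lam1 -> 1 <= p < 2 -> H0 inner J f ->
  gradient_flow_solution inner J f u -> extinction_time u = Tex%:E ->
  Tex = `|f| `^ (2 - p) / ((2 - p) * lam1) ->
  (forall k, 0 <= tk k < Tex) -> (forall k, tk k < tk k.+1) ->
  (fun k => ((1 - tk k / Tex) `^ (1 / (2 - p)))^-1 *: u (tk k)) @ \oo --> wstar ->
  ground_state p inner J wstar.
Proof.
move=> Hlsc Hl lam0 /andP[p1 p2] Hf [Hcont Hlip Hu0 Hder] HT HTex Htk Hinc Hw.
pose A := [set s : R | 0 <= s].
have Hc' := (subspace_continuousP _ _).1 Hcont.
have Hcu : forall t : R, 0 <= t -> u @ within A (nbhs t) --> u t by move=> t t0; exact: Hc'.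
clear Hc' Hcont Hlip.
have f0 : f != 0 by case: Hf.
have nf0 : 0 < `|f| by rewrite normr_gt0.
have lamle : forall v j, H0 inner J v -> J v = j%:E -> lam1 * `|v| `^ p <= p * j.
  move=> v j Hv Ev.
  have : (lam1%:E <= rayleigh p J v)%E.
    rewrite -Hl; apply: ereal_inf_lbound; by exists v.
  rewrite /rayleigh Ev -EFinM lee_fin.
  have v0 : 0 < `|v| `^ p by apply: powR_gt0; rewrite normr_gt0; case: Hv.
  by rewrite mulrAC ler_pdivlMr.
have lamle' : forall v, H0 inner J v -> (lam1%:E <= rayleigh p J v)%E.
  by move=> v Hv; rewrite -Hl; apply: ereal_inf_lbound; exists v.
clear Hl.
have Tle : forall t, 0 < t -> (forall s, t <= s -> u s = 0) -> Tex <= t.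
  move=> t t0 Hs; rewrite -lee_fin -HT; apply: ereal_inf_lbound; by exists t.
clear HT.
have Hinfo : forall t, 0 < t -> exists zeta j,
   [/\ subdiff inner J (u t) zeta,
       h^-1 *: (u (t + h) - u t) @[h --> (0 : R)^'+] --> - zeta,
       J (u t) = j%:E, 0 <= j & p * j <= inner zeta (u t)].
  move=> t t0; have [zeta [[Hz _] HD]] := Hder t t0.
  have [j Ej] := Jsub_fin Hz.
  exists zeta, j; split => //; first exact: Jfin_ge0 Ej.
  exact: sub_euler p1 Hz Ej.
clear Hder.
have orth : forall n, nullJ J n -> forall t, 0 <= t -> inner (u t) n = 0.
  move=> n Hn t t0.
  have key : forall sg : R, sg * inner (u t) n <= sg * inner (u 0) n.
    move=> sg.
    apply: (@dini_lim R (fun s => sg * inner (u s) n) A 0 t t0).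
    - by move=> s /andP[].
    - move=> s /andP[s0 _]; apply: cvgMl_tmp; apply: cvg_inner.
        exact: Hcu.
      exact: cvg_cst.
    - move=> s /andP[s0 _]; have [zeta [j [Hz HD _ _ _]]] := Hinfo s s0.
      exists (sg * - inner zeta n); first by rewrite (sub_null _ _ _ Hz Hn) oppr0 mulr0.
      have -> : (fun h => h^-1 * (sg * inner (u (s + h)) n - sg * inner (u s) n)) =
          (fun h => sg * (h^-1 * (inner (u (s + h)) n - inner (u s) n))).
        by apply/funext => h; ring.
      apply: cvgMl_tmp; exact: rder_inner HD.
  have := key 1; have := key (-1).
  have -> : inner (u 0) n = 0 by rewrite Hu0; case: Hf => _ ->.
  lra.
have cont_sq : forall r : R, 0 <= r ->
    (fun s => `|u s| ^+ 2) @ within A (nbhs r) --> `|u r| ^+ 2.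
  move=> r r0.
  have -> : (fun s => `|u s| ^+ 2) = (fun s => `|u s| * `|u s|).
    by apply/funext => s; rewrite expr2.
  rewrite expr2; apply: cvgM; apply: cvg_norm; exact: Hcu.
have nz : forall t, 0 <= t < Tex -> u t != 0.
  move=> t /andP[t0 tT]; apply/negP => /eqP ut0.
  have tpos : 0 < t.
    rewrite lt_neqAle t0 andbT; apply/negP => /eqP t0E.
    by move: f0; rewrite -Hu0 t0E ut0 eqxx.
  have zero : forall s, t <= s -> u s = 0.
    move=> s ts.
    have : `|u s| ^+ 2 <= `|u t| ^+ 2.
      apply: (@dini_lim R (fun r => `|u r| ^+ 2) A t s ts).
      - move=> r /andP[tr _]; rewrite /A /=; exact: le_trans t0 tr.
      - move=> r /andP[tr _]; apply: cont_sq; exact: le_trans t0 tr.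
      - move=> r /andP[tr _].
        have r0 : 0 < r by exact: lt_le_trans tpos (ltW tr).
        have [zeta [j [Hz HD Ej j0 Hpj]]] := Hinfo r r0.
        exists (- (2 * inner zeta (u r))); last exact: rder_sq HD.
        have : 0 <= p * j by apply: mulr_ge0 => //; lra.
        clear Ej; lra.
    rewrite ut0 normr0 expr0n /= => H.
    apply/normr0_eq0; apply/eqP; rewrite -(sqrf_eq0 `|u s|) eq_le H sqr_ge0.
    by [].
  have := Tle t tpos zero.
  by move=> /(lt_le_trans tT); rewrite ltxx.
pose q := (2 - p) / 2.
pose c := (2 - p) * lam1.
have c0 : 0 < c by apply: mulr_gt0 => //; lra.
have q0 : 0 < q by rewrite /q; lra.
pose G s := (`|u s| ^+ 2) `^ q.
have GE : forall s, G s = `|u s| `^ (2 - p).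
  move=> s; rewrite /G -powR_mulrn // -powRrM; congr (_ `^ _); rewrite /q; by field.
pose psi s := G s + c * s.
have Ffin : c * Tex = `|f| `^ (2 - p).
  rewrite HTex /c; field; apply/andP; split; apply: lt0r_neq0; lra.
have Tex0 : 0 < Tex.
  rewrite HTex; apply: divr_gt0; first exact: powR_gt0.
  exact: c0.
have psicont : forall t : R, 0 <= t < Tex -> psi @ within A (nbhs t) --> psi t.
  move=> t /andP[t0 tT].
  have e0 : 0 < `|u t| ^+ 2 by rewrite exprn_gt0 // normr_gt0 nz // t0 tT.
  have Dp := is_derive1_powR q e0.
  have pc : {for `|u t| ^+ 2, continuous (fun x : R => x `^ q)}.
    apply: differentiable_continuous; apply/derivable1_diffP; exact: (@ex_derive _ _ _ _ _ _ _ Dp).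
  apply: cvgD.
    exact: (continuous_cvg _ pc (cont_sq t t0)).
  apply: cvgMl_tmp; apply: cvg_within_filter; exact: cvg_id.
have Hut : forall t, 0 <= t < Tex -> H0 inner J (u t).
  move=> t /andP[t0 tT]; split; first by apply: nz; rewrite t0 tT.
  by move=> n Hn; apply: orth.
have psider : forall t, 0 < t < Tex -> exists zeta j,
    [/\ J (u t) = j%:E, p * j <= inner zeta (u t),
     (lam1 * `|u t| `^ p <= p * j) &
     (fun h => h^-1 * (psi (t + h) - psi t)) @ (0:R)^'+ -->
        (2 - p) * (lam1 - inner zeta (u t) / `|u t| `^ p)].
  move=> t /andP[t0 tT].
  have [zeta [j [Hz HD Ej j0 Hpj]]] := Hinfo t t0.
  exists zeta, j; split => //.
    apply: lamle Ej; apply: Hut; rewrite tT andbT; exact: ltW.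
  have ut0 : u t != 0 by apply: nz; rewrite tT (ltW t0).
  have e0 : 0 < `|u t| ^+ 2 by rewrite exprn_gt0 // normr_gt0.
  have N0 : 0 < `|u t| `^ p by apply: powR_gt0; rewrite normr_gt0.
  have Dp := is_derive1_powR q e0.
  have HG := @chain_right R (fun x => x `^ q) (fun s => `|u s| ^+ 2) t _ _ _ Dp erefl (rder_sq _ _ _ HD).
  have iden : (`|u t| ^+ 2) `^ (q - 1) = (`|u t| `^ p)^-1.
    rewrite -powR_mulrn // -powRrM -powRN; congr (_ `^ _); rewrite /q; by field.
  rewrite iden in HG.
  have HG2 : (fun h => h^-1 * ((`|u (t + h)| ^+ 2) `^ q - (`|u t| ^+ 2) `^ q) + c)
     @ (0:R)^'+ --> q * (`|u t| `^ p)^-1 * - (2 * inner zeta (u t)) + c.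
    by apply: cvgD => //; exact: cvg_cst.
  have -> : (2 - p) * (lam1 - inner zeta (u t) / `|u t| `^ p) =
      q * (`|u t| `^ p)^-1 * - (2 * inner zeta (u t)) + c.
    by rewrite /q /c; field; rewrite lt0r_neq0.
  move: HG2; apply: cvg_trans; apply: near_eq_cvg.
  near=> h; have h0 : 0 < h by near: h; exact: nbhs_right_gt.
  rewrite /psi /G /=.
  set a := (`|u (t + h)| ^+ 2) `^ q; set b := (`|u t| ^+ 2) `^ q.
  have -> : a + c * (t + h) - (b + c * t) = (a - b) + h * c by ring.
  by rewrite [RHS]mulrDr (mulrA h^-1 h c) mulVf ?mul1r // gt_eqF.
have psi_dec : forall a b, 0 <= a -> a <= b -> b < Tex -> psi b <= psi a.
  move=> a b a0 ab bT.
  apply: (@dini_lim R psi A a b ab).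
  - move=> s /andP[a_s _]; exact: le_trans a0 a_s.
  - move=> s /andP[a_s sb]; apply: psicont.
    by rewrite (le_trans a0 a_s) (le_lt_trans sb bT).
  - move=> s /andP[a_s sb].
    have s0 : 0 < s by exact: le_lt_trans a0 a_s.
    have [zeta [j [Ej Hpj Hlj Hlim]]] := psider s ltac:(by rewrite s0 (lt_trans sb bT)).
    exists ((2 - p) * (lam1 - inner zeta (u s) / `|u s| `^ p)) => //.
    have ut0 : u s != 0 by apply: nz; rewrite (ltW s0) (lt_trans sb bT).
    have N0 : 0 < `|u s| `^ p by apply: powR_gt0; rewrite normr_gt0.
    have : lam1 <= inner zeta (u s) / `|u s| `^ p.
      rewrite ler_pdivlMr //; clear Ej; lra.
    move=> H; apply: mulr_ge0_le0; first by lra.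
    by rewrite subr_le0.
have psi0 : psi 0 = `|f| `^ (2 - p) by rewrite /psi GE Hu0 mulr0 addr0.
have Gval : forall t, 0 <= t < Tex -> G t = `|f| `^ (2 - p) - c * t.
  move=> t /andP[t0 tT].
  apply/eqP; rewrite eq_le; apply/andP; split.
    have := psi_dec 0 t (lexx 0) t0 tT; rewrite psi0 /psi; lra.
  rewrite -Ffin; apply/ler_addgt0Pr => e e0.
  pose m := Num.min (e / c) (Tex - t).
  have m0 : 0 < m by rewrite /m lt_min divr_gt0 //=; lra.
  have me : m <= e / c by rewrite /m ge_min lexx.
  have mT : m <= Tex - t by rewrite /m ge_min lexx orbT.
  have cm : c * m <= e.
    have : c * m <= c * (e / c) by rewrite ler_pM2l.
    by rewrite [c * (e / c)]mulrC divfK // gt_eqF.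
  have := psi_dec t (Tex - m / 2) t0 ltac:(lra) ltac:(lra).
  rewrite /psi.
  have : 0 <= G (Tex - m / 2) by rewrite /G powR_ge0.
  lra.
have psi_const : forall t, 0 <= t < Tex -> psi t = `|f| `^ (2 - p).
  by move=> t Ht; rewrite /psi Gval // subrK.
have iz_eq : forall t, 0 < t < Tex -> exists j,
    J (u t) = j%:E /\ p * j <= lam1 * `|u t| `^ p.
  move=> t /andP[t0 tT].
  have [zeta [j [Ej Hpj Hlj Hlim]]] := psider t ltac:(by rewrite t0 tT).
  exists j; split => //.
  have ut0 : u t != 0 by apply: nz; rewrite (ltW t0) tT.
  have N0 : 0 < `|u t| `^ p by apply: powR_gt0; rewrite normr_gt0.
  have Hconst : forall h, 0 < h < Tex - t -> psi (t + h) = psi t.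
    move=> h /andP[h0 hT]; rewrite !psi_const //; apply/andP; split; lra.
  have D0 := @slope_const R psi t (Tex - t) _ ltac:(lra) Hconst Hlim.
  move/eqP: D0; rewrite mulf_eq0 => /orP[|]; first by move=> /eqP; lra.
  rewrite subr_eq0 => /eqP HE.
  have : inner zeta (u t) = lam1 * `|u t| `^ p by rewrite HE divfK // gt_eqF.
  clear Ej; lra.
have root : forall x : R, 0 <= x -> (x `^ (2 - p)) `^ (1 / (2 - p)) = x.
  move=> x x0; rewrite -powRrM.
  have -> : (2 - p) * (1 / (2 - p)) = 1 by field; apply: lt0r_neq0; lra.
  exact: powRr1.
pose a k := (1 - tk k / Tex) `^ (1 / (2 - p)).
pose w k := (a k)^-1 *: u (tk k).
pose M := lam1 * `|f| `^ p / p.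
have p0 : 0 < p by lra.
have info : forall k, (0 < k)%N ->
   [/\ `|w k| = `|f|, (forall n, nullJ J n -> inner (w k) n = 0) &
       (J (w k) <= M%:E)%E].
  move=> k k0.
  have t0 : 0 < tk k.
    case: k k0 => // k _; have := Hinc k; have := Htk k; case/andP => ? ? ?; lra.
  have tT : tk k < Tex by case/andP: (Htk k).
  have r0 : 0 < 1 - tk k / Tex.
    rewrite subr_gt0 ltr_pdivrMr // mul1r //.
  have a0 : 0 < a k by apply: powR_gt0.
  have nu : `|u (tk k)| = `|f| * a k.
    have HG := Gval (tk k) ltac:(by rewrite (ltW t0) tT).
    rewrite GE in HG.
    have E1 : `|f| `^ (2 - p) - c * tk k = `|f| `^ (2 - p) * (1 - tk k / Tex).
      rewrite -Ffin; field; exact: lt0r_neq0.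
    rewrite E1 in HG.
    rewrite -(root `|u (tk k)|) // HG powRM ?powR_ge0 ?(ltW r0) //.
    by rewrite root.
  have wn : `|w k| = `|f|.
    rewrite /w normrZ gtr0_norm ?invr_gt0 // nu mulrC -mulrA mulfV ?mulr1 //.
    exact: lt0r_neq0.
  split => //.
    move=> n Hn; rewrite /w innerZl orth ?mulr0 //; exact: ltW.
  have [j [Ej Hj]] := iz_eq (tk k) ltac:(by rewrite t0 tT).
  rewrite /w JZ ?invr_neq0 ?lt0r_neq0 // Ej -EFinM lee_fin.
  clear Ej.
  rewrite gtr0_norm ?invr_gt0 //.
  rewrite nu powRM ?(ltW a0) // in Hj.
  have BA : (a k)^-1 `^ p * a k `^ p = 1.
    rewrite -powRM ?invr_ge0 ?(ltW a0) // mulVf ?lt0r_neq0 //.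
    by rewrite powR1.
  have B0 : 0 <= (a k)^-1 `^ p by apply: powR_ge0.
  have H2 : p * ((a k)^-1 `^ p * j) <= lam1 * `|f| `^ p.
    have := ler_wpM2l B0 Hj.
    have -> : (a k)^-1 `^ p * (lam1 * (`|f| `^ p * a k `^ p)) =
       lam1 * `|f| `^ p * ((a k)^-1 `^ p * a k `^ p) by ring.
    rewrite BA mulr1 => H3.
    by rewrite mulrCA.
  by rewrite /M ler_pdivlMr // mulrC.
have ev1 : \forall k \near \oo, (0 < k)%N by exists 1%N.
have nws : `|wstar| = `|f|.
  have N1 : `|w k| @[k --> \oo] --> `|wstar| by apply: cvg_norm.
  have N2 : `|w k| @[k --> \oo] --> `|f|.
    apply: cvg_near_cst; near=> k.
    have k0 : (0 < k)%N by near: k; exact: ev1.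
    by case: (info k k0).
  exact: (cvg_unique (@norm_hausdorff _ _) N1 N2).
have ws0 : wstar != 0 by rewrite -normr_gt0 nws.
have Hws : H0 inner J wstar.
  split => // n Hn.
  have I1 : inner (w k) n @[k --> \oo] --> inner wstar n.
    by apply: cvg_inner => //; exact: cvg_cst.
  have I2 : inner (w k) n @[k --> \oo] --> 0.
    apply: cvg_near_cst; near=> k.
    have k0 : (0 < k)%N by near: k; exact: ev1.
    by case: (info k k0) => _ ->.
  exact: (cvg_unique (@norm_hausdorff _ _) I1 I2).
have JM : (J wstar <= M%:E)%E.
  rewrite leNgt; apply/negP => HM.
  have [Vn HV HVn] := Hlsc wstar M HM.
  have : \forall k \near \oo, (0 < k)%N /\ Vn (w k).
    near=> k; split; first by near: k; exact: ev1.
    by near: k; exact: Hw _ HV.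
  move=> /filter_ex [k [k0 Vk]].
  case: (info k k0) => _ _ Hk.
  by have := lt_le_trans (HVn _ Vk) Hk; rewrite ltxx.
split => // v Hv.
apply: le_trans (lamle' v Hv).
case: (Jcases wstar) => [Einf|[r Er]].
  by move: JM; rewrite Einf leye_eq.
rewrite /rayleigh Er -EFinM lee_fin nws.
have F0 : 0 < `|f| `^ p by apply: powR_gt0.
move: JM; rewrite Er lee_fin => JM.
clear Er.
have : p / `|f| `^ p * r <= p / `|f| `^ p * M.
  by rewrite ler_wpM2l // divr_ge0 // ltW.
have -> : p / `|f| `^ p * M = lam1.
  rewrite /M; field; apply/andP; split; exact: lt0r_neq0.
by [].
Unshelve. all: by end_near.
Qed.

End Main.
Theorem corollary7 (R : realType) (V : completeNormedModType R)
  (inner : V -> V -> R) (J : V -> \bar R) (p lam1 : R)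
  (f : V) (u : R -> V) (Tex : R) (wstar : V) (tk : nat -> R) :
  is_inner_product inner ->
  convex_functional J -> lower_semicontinuous J -> proper_functional J ->
  dense_set (effective_domain J) -> abs_homogeneous p J ->
  lambda1 p inner J = lam1%:E -> 0 < lam1 ->
  1 <= p < 2 ->
  H0 inner J f ->
  gradient_flow_solution inner J f u ->
  extinction_time u = Tex%:E ->
  Tex = `|f| `^ (2 - p) / ((2 - p) * lam1) ->
  (forall k, 0 <= tk k < Tex) ->
  (forall k, tk k < tk k.+1) ->
  tk @ \oo --> Tex ->
  (fun k => ((1 - tk k / Tex) `^ (1 / (2 - p)))^-1 *: u (tk k)) @ \oo --> wstar ->
  ground_state p inner J wstar.
Proof.
move=> Hi Hc Hlsc Hp _ Hh Hl lam0 Hp12 Hf Hgf HT HTex Htk Hinc _ Hw.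
exact: (@main_gs R V inner J p Hi Hc Hp Hh lam1 f u Tex wstar tk Hlsc Hl lam0 Hp12 Hf Hgf HT HTex Htk Hinc Hw).
Qed.
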